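(* Let $B$ and $H$ be differentiation bases in $\mathbb{R}^2$ with $B\subset H$. Then the union of at most countably many $R_{B,H}$-sets is a $W_{B,H}$-set, and the union of at most countably many $R^{+}_{B,H}$-sets is a $W^{+}_{B,H}$-set.
   Context: A differentiation basis in $\mathbb{R}^n$ is a mapping $B$ assigning to each $x\in\mathbb{R}^n$ a family $B(x)$ of bounded measurable sets of positive Lebesgue measure containing $x$, such that there is a sequence $R_k\in B(x)$ with $\operatorname{diam}R_k\to 0$. $B\subset H$ means $B(x)\subset H(x)$ for all $x$. For $f\in L(\mathbb{R}^n)$ the upper and lower derivatives of $\int f$ at $x$ with respect to $B$ are $\overline{D}_B(\int f,x)=\limsup_{R\in B(x),\,\operatorname{diam}R\to0}\frac{1}{|R|}\int_R f$ and $\underline{D}_B(\int f,x)=\liminf_{R\in B(x),\,\operatorname{diam}R\to0}\frac{1}{|R|}\int_R f$; $B$ differentiates $\int f$ if both equal $f(x)$ for almost every $x$. $F_B$ denotes the class of $f\in L(\mathbb{R}^n)$ whose integrals are differentiated by $B$. $\Gamma_2$ is the set of rotations of $\mathbb{R}^2$ about the origin. For $\gamma\in\Gamma_2$ the $\gamma$-rotated basis is $B(\gamma)(x)=\{x+\gamma(R-x): R\in B(x)\}$. For $E\subset\Gamma_2$: $E$ is a $W_{B,H}$-set (resp. $W^{+}_{B,H}$-set) if there exists $f\in L(\mathbb{R}^2)$ (resp. $f\in L(\mathbb{R}^2)$ with $f\ge 0$) such that (1) $f\notin F_{B(\gamma)}$ for every $\gamma\in E$ and (2) $f\in F_{H(\gamma)}$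 for every $\gamma\notin E$. $E$ is an $R_{B,H}$-set (resp. $R^{+}_{B,H}$-set) if there exists $f\in L(\mathbb{R}^2)$ (resp. $f\in L(\mathbb{R}^2)$ with $f\ge0$) such that (1) for every $\gamma\in E$, $\overline{D}_{B(\gamma)}(\int f,x)=\infty$ for almost every $x\in\mathbb{R}^2$, and (2) $f\in F_{H(\gamma)}$ for every $\gamma\notin E$. *)

(* Defs.v *)
From HB Require Import structures.
From mathcomp Require Import all_boot all_order all_algebra.
From mathcomp Require Import all_classical all_reals all_analysis.
Set Implicit Arguments. Unset Strict Implicit. Unset Printing Implicit Defensive.
Import Order.TTheory GRing.Theory Num.Theory.
Local Open Scope classical_set_scope.
Local Open Scope ring_scope.

(* Lebesgue measure on R^2 is the
   completion (Caratheodory extension) of the product of the (Borel)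
   Lebesgue measures on R, so "measurable" below means Lebesgue measurable. *)
Section Plane.
Context {R : realType}.

Local Notation borel2_measure :=
  ((@lebesgue_measure R \x @lebesgue_measure R)%E :
     {measure set (measurableTypeR R * measurableTypeR R)%type -> \bar R}).

Definition plane : measurableType _ := caratheodory_type (mu_ext borel2_measure).

Definition lebesgue2 : {measure set plane -> \bar R} :=
  @completed_measure_extension _ _ _ borel2_measure.

Definition lmeasurable (A : set plane) := measurable A.

Definition edist (y z : plane) : R :=
  Num.sqrt ((y.1 - z.1) ^+ 2 + (y.2 - z.2) ^+ 2).

Definition diam (A : set plane) : R :=
  sup [set edist y z | y in A & z in A].

Definition bounded2 (A : set plane) :=
  exists M : R, forall y, A y -> `|y.1| <= M /\ `|y.2| <= M.

Definition diff_basis (B : plane -> set (set plane)) :=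
  forall x : plane,
    (forall A, B x A ->
       [/\ bounded2 A, lmeasurable A, (0 < lebesgue2 A)%E & A x]) /\
    exists S : nat -> set plane,
      (forall k, B x (S k)) /\ (fun k => diam (S k)) @ \oo --> 0.

Definition sub_basis (B H : plane -> set (set plane)) := forall x, B x `<=` H x.

Definition L1 (f : plane -> R) := lebesgue2.-integrable setT (EFin \o f).

Definition avg (f : plane -> R) (A : set plane) : \bar R :=
  ((fine (lebesgue2 A))^-1)%:E * (\int[lebesgue2]_(y in A) (f y)%:E)%E.

Definition upper_der (B : plane -> set (set plane)) (f : plane -> R) (x : plane)
  : \bar R :=
  ereal_inf [set ereal_sup [set avg f A | A in [set A | B x A /\ diam A < d]]
            | d in [set d : R | 0 < d]].

Definition lower_der (B : plane -> set (set plane)) (f : plane -> R) (x : plane)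
  : \bar R :=
  ereal_sup [set ereal_inf [set avg f A | A in [set A | B x A /\ diam A < d]]
            | d in [set d : R | 0 < d]].

Definition FB (B : plane -> set (set plane)) (f : plane -> R) :=
  L1 f /\ {ae lebesgue2, forall x, upper_der B f x = (f x)%:E /\
                                   lower_der B f x = (f x)%:E}.

Record rotation2 := Rot2 { rc : R; rs : R; _ : rc ^+ 2 + rs ^+ 2 = 1 }.

Definition rot_about (g : rotation2) (x y : plane) : plane :=
  (x.1 + (rc g * (y.1 - x.1) - rs g * (y.2 - x.2)),
   x.2 + (rs g * (y.1 - x.1) + rc g * (y.2 - x.2))).

Definition rot_basis (B : plane -> set (set plane)) (g : rotation2) : plane -> set (set plane) :=
  fun x => [set rot_about g x @` A | A in B x].

Definition W_set (B H : plane -> set (set plane)) (E : set rotation2) :=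
  exists f, L1 f /\
    (forall g, E g -> ~ FB (rot_basis B g) f) /\
    (forall g, ~ E g -> FB (rot_basis H g) f).

Definition Wplus_set (B H : plane -> set (set plane)) (E : set rotation2) :=
  exists f, L1 f /\ (forall x, 0 <= f x) /\
    (forall g, E g -> ~ FB (rot_basis B g) f) /\
    (forall g, ~ E g -> FB (rot_basis H g) f).

Definition R_set (B H : plane -> set (set plane)) (E : set rotation2) :=
  exists f, L1 f /\
    (forall g, E g -> {ae lebesgue2, forall x, upper_der (rot_basis B g) f x = +oo%E}) /\
    (forall g, ~ E g -> FB (rot_basis H g) f).

Definition Rplus_set (B H : plane -> set (set plane)) (E : set rotation2) :=
  exists f, L1 f /\ (forall x, 0 <= f x) /\
    (forall g, E g -> {ae lebesgue2, forall x, upper_der (rot_basis B g) f x = +oo%E}) /\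
    (forall g, ~ E g -> FB (rot_basis H g) f).

End Plane.
Arguments rotation2 R : clear implicits.

(* Main.v *)
Require Import Defs.
From HB Require Import structures.
From mathcomp Require Import all_boot all_order all_algebra.
From mathcomp Require Import all_classical all_reals all_analysis.
From mathcomp Require Import ring lra.
From mathcomp Require Import measurable_realfun.
Require Import Defs.
Set Implicit Arguments. Unset Strict Implicit. Unset Printing Implicit Defensive.
Import Order.TTheory GRing.Theory Num.Theory.
Local Open Scope classical_set_scope.
Local Open Scope ring_scope.

Section Geo.
Context {R : realType}.
Local Notation P := (@plane R).

Lemma edist_rot (g : rotation2 R) (x y z : P) :
  edist (rot_about g x y) (rot_about g x z) = edist y z.
Proof.
case: g => c s h; case: x => x1 x2; case: y => y1 y2; case: z => z1 z2.
rewrite /edist /rot_about /=; congr Num.sqrt.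
transitivity ((c ^+ 2 + s ^+ 2) * ((y1 - z1) ^+ 2 + (y2 - z2) ^+ 2)).
  ring.
by rewrite h mul1r.
Qed.

Lemma rot_fix (g : rotation2 R) (x : P) : rot_about g x x = x.
Proof. by case: x => a b; rewrite /rot_about /= !subrr !mulr0 subrr addr0 !addr0. Qed.

Lemma edist_ge1 (y z : P) : `|y.1 - z.1| <= edist y z.
Proof.
rewrite /edist -sqrtr_sqr ler_sqrt; last by rewrite addr_ge0 // sqr_ge0.
by rewrite lerDl sqr_ge0.
Qed.

Lemma edist_ge0 (y z : P) : 0 <= edist y z.
Proof. exact: sqrtr_ge0. Qed.

Definition dset (A : set P) := [set edist y z | y in A & z in A].

Lemma bounded_dset (A : set P) : bounded2 A -> has_ubound (dset A).
Proof.
move=> [M hM]; exists (Num.sqrt (8 * M ^+ 2)) => _ [y Ay [z Az <-]].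
rewrite /edist ler_wsqrtr //.
have [h1 h2] := hM _ Ay; have [h3 h4] := hM _ Az.
move: h1 h2 h3 h4; rewrite !ler_norml => /andP[a1 a2] /andP[a3 a4] /andP[a5 a6] /andP[a7 a8].
nra.
Qed.

Lemma edist_le_diam (A : set P) y z : bounded2 A -> A y -> A z ->
  edist y z <= diam A.
Proof.
move=> bA Ay Az; apply: (ub_le_sup (bounded_dset bA)).
by exists y => //; exists z.
Qed.

Lemma dset_rot (g : rotation2 R) x (A : set P) :
  dset (rot_about g x @` A) = dset A.
Proof.
apply/seteqP; split => t.
  by move=> [_ [y Ay <-] [_ [z Az <-] <-]]; rewrite edist_rot; exists y => //; exists z.
move=> [y Ay [z Az <-]]; rewrite -(edist_rot g x).
by exists (rot_about g x y); [exists y|exists (rot_about g x z) => //; exists z].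
Qed.

Lemma diam_rot (g : rotation2 R) x (A : set P) :
  diam (rot_about g x @` A) = diam A.
Proof. by have := dset_rot g x A; rewrite /diam /dset => ->. Qed.

Lemma rot_close (g : rotation2 R) x (A : set P) y :
  bounded2 A -> A x -> (rot_about g x @` A) y ->
  `|y.1 - x.1| <= diam (rot_about g x @` A).
Proof.
move=> bA Ax [y0 Ay0 <-]; rewrite diam_rot.
apply: (le_trans (edist_ge1 _ _)).
rewrite -{2}(rot_fix g x) edist_rot.
exact: edist_le_diam.
Qed.

End Geo.
Import HBNNSimple.
Section IntZ.
Context {R : realType}.
Local Open Scope ereal_scope.

Lemma muleBr_pos (c : R) (a b : \bar R) : (0 < c)%R ->
  c%:E * (a - b) = c%:E * a - c%:E * b.
Proof.
move=> c0.
have hy : c%:E * +oo = +oo by rewrite mulry gtr0_sg ?mul1e.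
have hny : c%:E * -oo = -oo by rewrite mulrNy gtr0_sg ?mul1e.
case: a => [a||]; case: b => [b||] //=;
  rewrite ?hy ?hny -?EFinM ?mulrBr ?EFinB //= ?addeNy ?addNye ?addye ?addey ?hy ?hny //=.
Qed.

Lemma integralZ_pos d (T : measurableType d) (mu : {measure set T -> \bar R})
  (D : set T) (f : T -> \bar R) (c : R) : (0 < c)%R ->
  \int[mu]_(x in D) (c%:E * f x) = c%:E * \int[mu]_(x in D) f x.
Proof.
move=> c0.
have ic0 : (0 <= c^-1)%R by rewrite invr_ge0 ltW.
have key : forall F : T -> \bar R,
  ereal_sup [set sintegral mu h | h in [set h : {nnsfun T >-> R} |
     forall x, (h x)%:E <= c%:E * F x]] =
  c%:E * ereal_sup [set sintegral mu h | h in [set h : {nnsfun T >-> R} |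
     forall x, (h x)%:E <= F x]].
  move=> F; rewrite -ereal_sup_pZl //; congr ereal_sup; apply/seteqP; split => t.
  - move=> [h hF <-]; exists (sintegral mu (scale_nnsfun h ic0)).
      exists (scale_nnsfun h ic0) => // x /=.
      by rewrite EFinM lee_pdivrMl // hF.
    rewrite -sintegralrM; apply: eq_sintegral => x /=.
    by rewrite mulrA divff ?mul1r // gt_eqF.
  - move=> [_ [h hF <-] <-]; exists (scale_nnsfun h (ltW c0)).
      by move=> x /=; rewrite EFinM lee_pmul2l // hF.
    by rewrite -sintegralrM.
rewrite /integral erestrict_scale ge0_funeposM ?ltW // ge0_funenegM ?ltW //.
by rewrite !key muleBr_pos.
Qed.

End IntZ.
Section Der.
Context {R : realType}.
Local Notation P := (@plane R).
Implicit Types (Bs : P -> set (set P)) (f h : P -> R) (x : P).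

Definition Sd Bs f x (d : R) := [set avg f A | A in [set A | Bs x A /\ diam A < d]].

Lemma avg_eq f h (A : set P) : {in A, f =1 h} -> avg f A = avg h A.
Proof.
move=> fh; rewrite /avg; congr (_ * _)%E; apply: eq_integral => y yA.
by rewrite (fh y yA).
Qed.

Lemma avgZ f (c : R) (A : set P) : 0 < c ->
  avg (fun y => c * f y) A = (c%:E * avg f A)%E.
Proof.
move=> c0; rewrite /avg.
rewrite (_ : (fun y => (c * f y)%:E) = (fun y => c%:E * (f y)%:E)%E); last first.
  by apply: funext => y; rewrite EFinM.
by rewrite integralZ_pos // muleCA.
Qed.

Lemma upper_derZ Bs f x (c : R) : 0 < c ->
  upper_der Bs (fun y => c * f y) x = (c%:E * upper_der Bs f x)%E.
Proof.
move=> c0; rewrite /upper_der -ereal_inf_pZl // image_comp.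
congr ereal_inf; apply: eq_imagel => d _ /=.
rewrite -ereal_sup_pZl // image_comp; congr ereal_sup; apply: eq_imagel => A _ /=.
exact: avgZ.
Qed.

Lemma lower_derZ Bs f x (c : R) : 0 < c ->
  lower_der Bs (fun y => c * f y) x = (c%:E * lower_der Bs f x)%E.
Proof.
move=> c0; rewrite /lower_der -ereal_sup_pZl // image_comp.
congr ereal_sup; apply: eq_imagel => d _ /=.
rewrite -ereal_inf_pZl // image_comp; congr ereal_inf; apply: eq_imagel => A _ /=.
exact: avgZ.
Qed.

Lemma Sd_sub Bs f h x (d0 d e : R) :
  (forall A, Bs x A -> diam A < d0 -> {in A, f =1 h}) -> d <= d0 -> d <= e ->
  Sd Bs f x d `<=` Sd Bs h x e.
Proof.
move=> fh dd0 de _ [A [BA dA] <-]; exists A.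
  by split => //; exact: (lt_le_trans dA de).
by apply/esym/avg_eq/fh => //; exact: (lt_le_trans dA dd0).
Qed.

Lemma upper_loc_le Bs f h x (d0 : R) : 0 < d0 ->
  (forall A, Bs x A -> diam A < d0 -> {in A, f =1 h}) ->
  (upper_der Bs f x <= upper_der Bs h x)%E.
Proof.
move=> d00 fh; apply: le_ereal_inf_tmp => _ [d d0' <-].
have m0 : 0 < Order.min d d0 by rewrite lt_min d0' d00.
apply: (le_trans (ereal_inf_lbound _)).
  by exists (Order.min d d0) => //.
apply: ereal_sup_le; apply: (@Sd_sub _ _ _ _ d0).
- by move=> A BA dA y yA; rewrite (fh A BA dA y yA).
- by rewrite ge_min lexx orbT.
- by rewrite ge_min lexx.
Qed.

Lemma lower_loc_le Bs f h x (d0 : R) : 0 < d0 ->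
  (forall A, Bs x A -> diam A < d0 -> {in A, f =1 h}) ->
  (lower_der Bs f x <= lower_der Bs h x)%E.
Proof.
move=> d00 fh; apply: ge_ereal_sup => _ [d d0' <-].
have m0 : 0 < Order.min d d0 by rewrite lt_min d0' d00.
apply: (le_trans _ (ereal_sup_ubound _)); last by exists (Order.min d d0).
apply: ereal_inf_le_tmp; apply: (Sd_sub (d0 := d0) (f := h) (h := f)).
- by move=> A BA dA y yA; rewrite (fh A BA dA y yA).
- by rewrite ge_min lexx orbT.
- by rewrite ge_min lexx.
Qed.

Lemma der_loc Bs f h x (d0 : R) : 0 < d0 ->
  (forall A, Bs x A -> diam A < d0 -> {in A, f =1 h}) ->
  upper_der Bs f x = upper_der Bs h x /\ lower_der Bs f x = lower_der Bs h x.
Proof.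
move=> d00 fh.
have hf : forall A, Bs x A -> diam A < d0 -> {in A, h =1 f}.
  by move=> A BA dA y yA; rewrite (fh A BA dA y yA).
by split; apply/le_anti/andP; split;
  [apply: upper_loc_le fh|apply: upper_loc_le hf|
   apply: lower_loc_le fh|apply: lower_loc_le hf].
Qed.

Lemma der0 Bs x : (forall d, 0 < d -> exists A, Bs x A /\ diam A < d) ->
  upper_der Bs (fun=> 0) x = 0%E /\ lower_der Bs (fun=> 0) x = 0%E.
Proof.
move=> ne.
have a0 A : avg (fun=> 0) A = 0%E.
  by rewrite /avg integral0_eq ?mule0.
have S0 d : 0 < d -> Sd Bs (fun=> 0) x d = [set 0%E].
  move=> d0; apply/seteqP; split => t.
    by move=> [A _ <-]; rewrite a0.
  by move=> ->; have [A [BA dA]] := ne d d0; exists A => //; rewrite a0.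
have T1 : [set ereal_sup (Sd Bs (fun=> 0) x d) | d in [set d : R | 0 < d]] = [set 0%E].
  apply/seteqP; split => t.
    by move=> [d d0 <-]; rewrite S0 // ereal_sup1.
  by move=> ->; exists 1 => //=; rewrite S0 // ereal_sup1.
have T2 : [set ereal_inf (Sd Bs (fun=> 0) x d) | d in [set d : R | 0 < d]] = [set 0%E].
  apply/seteqP; split => t.
    by move=> [d d0 <-]; rewrite S0 // ereal_inf1.
  by move=> ->; exists 1 => //=; rewrite S0 // ereal_inf1.
split.
  by rewrite /upper_der; have := T1; rewrite /Sd => ->; rewrite ereal_inf1.
by rewrite /lower_der; have := T2; rewrite /Sd => ->; rewrite ereal_sup1.
Qed.

End Der.

Section RotLoc.
Context {R : realType}.
Local Notation P := (@plane R).

Lemma rot_loc (B : P -> set (set P)) (g : rotation2 R) (x : P) (f h : P -> R)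
  (d0 : R) : diff_basis B -> 0 < d0 ->
  (forall y, `|y.1 - x.1| < d0 -> f y = h y) ->
  upper_der (rot_basis B g) f x = upper_der (rot_basis B g) h x /\
  lower_der (rot_basis B g) f x = lower_der (rot_basis B g) h x.
Proof.
move=> dB d00 fh; apply: (der_loc d00) => _ [A BA <-] dA y yA.
apply: fh; apply: (le_lt_trans _ dA).
have [bA' _ _ Ax'] := (dB x).1 A BA.
rewrite inE in yA; exact: (rot_close bA' Ax' yA).
Qed.

Lemma rot_small (B : P -> set (set P)) (g : rotation2 R) (x : P) :
  diff_basis B -> forall d, 0 < d ->
  exists A, rot_basis B g x A /\ diam A < d.
Proof.
move=> dB d d0; have [_ [S [SB Sc]]] := dB x.
case: (cvgr_lt _ Sc _ d0) => N _ hN.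
exists (rot_about g x @` S N); split; first by exists (S N).
by rewrite diam_rot; apply: hN => /=.
Qed.



End RotLoc.
Section Meas.
Context {R : realType}.
Local Notation P := (@plane R).

Lemma plane_measX (J : set R) : measurable J -> measurable ((J `*` setT) : set P).
Proof. by move=> mJ; apply: caratheodory_measurable_mu_ext; exact: measurableX. Qed.

Lemma lebesgue2X (J : set R) : measurable J ->
  lebesgue2 ((J `*` setT) : set P) = (lebesgue_measure J * lebesgue_measure setT)%E.
Proof.
move=> mJ; rewrite /lebesgue2 /= /completed_measure_extension.
have := @measurable_mu_extE _ R _ (lebesgue_measure \x lebesgue_measure)%E (J `*` setT) (measurableX mJ measurableT).
move=> ->; exact: product_measure1E.
Qed.

Lemma lebT : lebesgue_measure (setT : set R) = +oo%E.
Proof. by rewrite -set_itvNyy lebesgue_measure_itv. Qed.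

Definition strip (k : nat) : set R := `]k%:R, k.+1%:R[.

Lemma strip_pos k : (0 < lebesgue2 ((strip k `*` setT) : set P))%E.
Proof.
rewrite lebesgue2X; last exact: measurable_itv.
rewrite lebT /strip lebesgue_measure_itv /= lte_fin ltr_nat ltnSn.
by rewrite -EFinB mulry gtr0_sg ?mul1e // subr_gt0 ltr_nat ltnSn.
Qed.

Definition Lines : set P := [set x | exists2 k : nat, (0 < k)%N & x.1 = k%:R].

Lemma Lines_negl : lebesgue2.-negligible Lines.
Proof.
apply: (negligibleS (A := \bigcup_k (([set k%:R] `*` setT) : set P))).
  by move=> x [k _ xk]; exists k => //=; split.
apply: negligible_bigcup => k; exists (([set k%:R] `*` setT) : set P); split => //.
  by apply: plane_measX; exact: measurable_set1.
by rewrite lebesgue2X ?lebesgue_measure_set1 ?mul0e //; exact: measurable_set1.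
Qed.

Definition reg (x : P) : nat := Num.truncn x.1.

Definition Jk (k : nat) : set R :=
  if k is 0 then `]-oo, 1[ else `[k%:R, k.+1%:R[.

Lemma Jk_truncn k (t : R) : Jk k t <-> Num.truncn t = k.
Proof.
case: k => [|k] /=; rewrite in_itv /=.
  split => [h|h]; first by apply/truncn0Pn; rewrite -ltNge.
  by rewrite ltNge; apply/negP => /truncn0Pn; rewrite h.
split => [h|h]; first exact: truncn_def.
have t1 : (1 <= t) by rewrite -truncn_gt0 h.
by move: (truncn_eq k.+1 (le_trans ler01 t1)); rewrite h eqxx => <-.
Qed.

Lemma measurable_reg k : measurable [set x : P | reg x = k].
Proof.
have -> : [set x : P | reg x = k] = ((Jk k `*` setT) : set P).
  by apply/seteqP; split => x /=; rewrite /reg => h; [split => //; apply/Jk_truncn|apply/Jk_truncn; case: h].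
apply: plane_measX; case: k => [|k] /=; exact: measurable_itv.
Qed.

Definition glue (c : nat -> R) (fs : nat -> P -> R) (x : P) : R :=
  c (reg x) * fs (reg x) x.

Lemma glue_meas c fs : (forall k, measurable_fun setT (fs k)) ->
  measurable_fun setT (glue c fs).
Proof.
move=> mf.
have -> : (setT : set P) = \bigcup_k [set x : P | reg x = k].
  by apply/seteqP; split => x // _; exists (reg x).
apply/measurable_fun_bigcup => [k|k]; first exact: measurable_reg.
apply: (eq_measurable_fun (fun x => c k * fs k x)).
  by move=> x; rewrite inE /= /glue => ->.
apply: (measurable_funS measurableT) => //.
apply: measurable_realfun.measurable_funM => //; exact: measurable_cst.
Qed.

End Meas.
Import HBNNSimple.
Section Main.
Context {R : realType}.
Local Notation P := (@plane R).
Lemma mabs_gen d (T : measurableType d) (D : set T) (g : T -> R) :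
  measurable_fun D g -> measurable_fun D (fun x => (`|(g x)%:E|%E : \bar R)).
Proof. move=> mg; apply: measurableT_comp => //; exact/measurable_EFinP. Qed.

Lemma glue_L1 (c : nat -> R) (fs : nat -> P -> R) : (forall k, L1 (fs k)) -> (forall k, 0 < c k) ->
  (forall k, ((c k)%:E * \int[lebesgue2]_(x in setT) `|(fs k x)%:E|
     <= (1 / (2 ^ k.+1)%:R)%:E)%E) ->
  L1 (glue c fs).
Proof.
move=> L cpos cb.
have mfs k : measurable_fun setT (fs k).
  by have /integrableP[/measurable_EFinP] := L k.
have mg := glue_meas c mfs.
apply/integrableP; split; first exact/measurable_EFinP.
pose K := fun k => [set x : P | reg x = k].
have UK : (setT : set P) = \bigcup_k K k.
  by apply/seteqP; split => x // _; exists (reg x).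
have tK : trivIset setT K by move=> i j _ _ [x [hi hj]]; rewrite -hi -hj.
rewrite UK ge0_integral_bigcup.
all: try (by move=> x _; exact: abse_ge0).
all: try exact: measurable_reg.
all: try exact: tK.
2: { rewrite -UK. 
  exact: mabs_gen mg. }
apply: (le_lt_trans (lee_nneseries (v := fun k => (1 / (2 ^ k.+1)%:R)%:E) _ _)).
- by move=> k _ _; apply: integral_ge0 => x _; exact: abse_ge0.
- move=> k _; apply: le_trans (cb k).
  rewrite -integralZ_pos //.
  have -> : (\int[lebesgue2]_(x in K k) `|(EFin \o glue c fs) x| =
     \int[lebesgue2]_(x in K k) ((c k)%:E * `|(fs k x)%:E|))%E.
    apply/eq_integral => x; rewrite inE /K /= => xk.
    by rewrite /glue xk /= -EFinM normrM gtr0_norm.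
  apply: ge0_subset_integral => //; first exact: measurable_reg.
  + by apply: emeasurable_funM; [exact: measurable_cst|exact: mabs_gen].
  + by move=> x _; rewrite mule_ge0 // ?lee_fin ?(ltW (cpos k)) // abse_ge0.
apply: (le_lt_trans (epsilon_trick0 xpredT ler01)).
exact: ltry.
Qed.


Lemma reg_loc (x : P) : ~ Lines x ->
  exists d0 : R, 0 < d0 /\ forall y : P, `|y.1 - x.1| < d0 -> reg y = reg x.
Proof.
move=> nL; rewrite /reg.
have t0 : forall t : R, t < 1 -> Num.truncn t = 0%N.
  by move=> t ht; apply/truncn0Pn; rewrite -ltNge.
case: (ltP x.1 1) => hx.
  exists (1 - x.1); split; first by rewrite subr_gt0.
  move=> y; rewrite ltr_norml => /andP[_ h].
  have y1 : y.1 < 1 by move: h; rewrite ltrD2r.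
  by rewrite !t0.
have x0 : 0 <= x.1 by exact: le_trans ler01 hx.
have /andP[kx xk] := truncn_itv x0.
set k := Num.truncn x.1 in kx xk *.
have k0 : (0 < k)%N by rewrite truncn_gt0.
have kx' : k%:R < x.1.
  rewrite lt_neqAle kx andbT; apply/eqP => e; apply: nL; exists k => //.
exists (Order.min (x.1 - k%:R) (k.+1%:R - x.1)); split.
  by rewrite lt_min !subr_gt0 kx' xk.
move=> y; rewrite lt_min !ltr_norml => /andP[/andP[h1 h2] /andP[h3 h4]].
move: h1 h4; rewrite opprB !ltrD2r => h1 h4.
by apply: truncn_def; rewrite h4 andbT ltW.
Qed.

Lemma glue_loc (B : P -> set (set P)) (g : rotation2 R) (x : P)
  (c : nat -> R) (fs : nat -> P -> R) :
  diff_basis B -> ~ Lines x -> 0 < c (reg x) ->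
  upper_der (rot_basis B g) (glue c fs) x =
    ((c (reg x))%:E * upper_der (rot_basis B g) (fs (reg x)) x)%E /\
  lower_der (rot_basis B g) (glue c fs) x =
    ((c (reg x))%:E * lower_der (rot_basis B g) (fs (reg x)) x)%E.
Proof.
move=> dB nL cp; have [d0 [d00 hd]] := reg_loc nL.
have hfh : forall y : P, `|y.1 - x.1| < d0 -> glue c fs y = c (reg x) * fs (reg x) y.
  by move=> y hy; rewrite /glue (hd y hy).
have [u l] := @rot_loc R B g x (glue c fs) (fun y => c (reg x) * fs (reg x) y) d0 dB d00 hfh.
rewrite u l; split; [exact: upper_derZ | exact: lower_derZ].
Qed.

Definition cc (fs : nat -> P -> R) (k : nat) : R :=
  ((2 ^ k.+1)%:R * (1 + fine (\int[lebesgue2]_(x in setT) `|(fs k x)%:E|)%E))^-1.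

Lemma cc_prop (fs : nat -> P -> R) k : L1 (fs k) ->
  0 < cc fs k /\
  ((cc fs k)%:E * \int[lebesgue2]_(x in setT) `|(fs k x)%:E|
     <= (1 / (2 ^ k.+1)%:R)%:E)%E.
Proof.
move=> /integrableP[_ fin].
set I := (\int[lebesgue2]_(x in setT) `|(fs k x)%:E|)%E in fin *.
have I0 : (0 <= I)%E by apply: integral_ge0 => x _; exact: abse_ge0.
have a0 : 0 <= fine I by exact: fine_ge0.
have eI : I = (fine I)%:E by rewrite fineK // ge0_fin_numE.
have p0 : 0 < (2 ^ k.+1)%:R :> R by rewrite ltr0n expn_gt0.
have cp : 0 < cc fs k by rewrite /cc invr_gt0 mulr_gt0 // ltr_pwDl.
split => //; rewrite /cc -/I eI -EFinM lee_fin invfM -mulrA mul1r.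
have hp : 0 < 1 + fine I by apply: (lt_le_trans ltr01); rewrite lerDl.
rewrite -[X in _ <= X]mulr1; apply: ler_wpM2l; first by rewrite invr_ge0 ltW.
rewrite mulrC ler_pdivrMr /=; [by rewrite mul1r lerDr | exact: hp].
Qed.

Lemma ae_and (Q1 Q2 : P -> Prop) :
  {ae lebesgue2, forall x, Q1 x} -> {ae lebesgue2, forall x, Q2 x} ->
  {ae lebesgue2, forall x, Q1 x /\ Q2 x}.
Proof. by apply: filterS2 => x. Qed.

Lemma ae_nLines : {ae lebesgue2, forall x : P, ~ Lines x}.
Proof.
apply: (negligibleS _ Lines_negl) => x /=.
by move=> nnL; apply: contrapT => nL.
Qed.

End Main.

Section Final.
Context {R : realType}.
Local Notation P := (@plane R).

Lemma FB0 (B : P -> set (set P)) (g : rotation2 R) :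
  diff_basis B -> FB (rot_basis B g) (fun=> 0).
Proof.
move=> dB; split; first exact: integrable0.
apply: aeW => x; have [-> ->] := der0 (rot_small g x dB); done.
Qed.

Lemma ae_count (Q : nat -> P -> Prop) :
  (forall k, {ae lebesgue2, forall x, Q k x}) ->
  {ae lebesgue2, forall x, forall k, Q k x}.
Proof.
move=> h; apply: (negligibleS _ (negligible_bigcup h)) => x /= nx.
have [k nk] : exists k, ~ Q k x by apply/existsNP.
by exists k.
Qed.

Lemma main_glue (B H : P -> set (set P)) (E : nat -> set (rotation2 R))
  (fs : nat -> P -> R) :
  diff_basis B -> diff_basis H ->
  (forall k, L1 (fs k)) ->
  (forall k g, E k g ->
     {ae lebesgue2, forall x, upper_der (rot_basis B g) (fs k) x = +oo%E}) ->
  (forall k g, ~ E k g -> FB (rot_basis H g) (fs k)) ->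
  L1 (glue (cc fs) fs) /\
  (forall g, (\bigcup_k E k) g -> ~ FB (rot_basis B g) (glue (cc fs) fs)) /\
  (forall g, ~ (\bigcup_k E k) g -> FB (rot_basis H g) (glue (cc fs) fs)).
Proof.
move=> dB dH L hE hnE.
have cpos k : 0 < cc fs k := (cc_prop (L k)).1.
have Lf : L1 (glue (cc fs) fs) := glue_L1 L cpos (fun k => (cc_prop (L k)).2).
split => //; split.
- move=> g [k _ Ekg] [_ hae].
  have h3 := ae_and (ae_and (hE k g Ekg) hae) ae_nLines.
  case: h3 => N [mN N0 sN].
  have sub : ((strip k `*` setT) : set P) `<=` N.
    move=> x [sx _]; apply: sN => -[[u1 [u2 _]] nL].
    have rx : reg x = k.
      rewrite /reg; apply: truncn_def.
      by move: sx; rewrite /strip /= in_itv /= => /andP[a b]; rewrite (ltW a) b.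
    have [up _] := @glue_loc R B g x (cc fs) fs dB nL (cpos _).
    have hy : ((cc fs k)%:E * +oo)%E = +oo%E by rewrite mulry gtr0_sg ?mul1e.
    by rewrite up rx u1 hy in u2.
  have := le_measure lebesgue2 (mem_set (plane_measX (measurable_itv _)))
    (mem_set mN) sub.
  move=> hle; have h00 : (lebesgue2 N <= 0)%E by rewrite N0.
  have h0 := le_trans hle h00.
  by have := lt_le_trans (strip_pos k) h0; rewrite ltxx.
- move=> g nE; split => //.
  have hk k : {ae lebesgue2, forall x,
      upper_der (rot_basis H g) (fs k) x = (fs k x)%:E /\
      lower_der (rot_basis H g) (fs k) x = (fs k x)%:E}.
    by apply: (hnE k g _).2 => e; apply: nE; exists k.
  have hall := ae_count hk.
  apply: filterS2 hall ae_nLines => x hx nL.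
  have [up lo] := @glue_loc R H g x (cc fs) fs dH nL (cpos _).
  have [u l] := hx (reg x).
  by rewrite up lo u l /glue -EFinM.
Qed.

End Final.
Local Open Scope classical_set_scope.

Lemma enum_countable (T : Type) (F : set (set T)) : countable F ->
  F = set0 \/ exists e : nat -> set T, F = range e.
Proof.
move=> /pfcard_geP[->|/surjfunPex[e eF]]; first by left.
by right; exists e.
Qed.

Theorem theorem3 (R : realType) (B H : @plane R -> set (set (@plane R))) :
  diff_basis B -> diff_basis H -> sub_basis B H ->
  (forall F : set (set (rotation2 R)), countable F ->
     (forall E, F E -> R_set B H E) -> W_set B H (\bigcup_(E in F) E)) /\
  (forall F : set (set (rotation2 R)), countable F ->
     (forall E, F E -> Rplus_set B H E) -> Wplus_set B H (\bigcup_(E in F) E)).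
Proof.
move=> dB dH _; split => F cF hF.
- have [F0|[e Fe]] := enum_countable cF.
    rewrite F0 bigcup_set0; exists (fun=> 0); split; first exact: integrable0.
    by split => [g []|g _]; exact: FB0.
  have hR k : R_set B H (e k) by apply: hF; rewrite Fe; exists k.
  pose fs k := projT1 (cid (hR k)).
  have Ps k : L1 (fs k) /\
    (forall g, e k g -> {ae lebesgue2, forall x, upper_der (rot_basis B g) (fs k) x = +oo%E}) /\
    (forall g, ~ e k g -> FB (rot_basis H g) (fs k)) := projT2 (cid (hR k)).
  have [Lf [h1 h2]] := main_glue dB dH (fun k => (Ps k).1)
    (fun k g => (Ps k).2.1 g) (fun k g => (Ps k).2.2 g).
  have -> : \bigcup_(E in F) E = \bigcup_k e k.
    by rewrite Fe bigcup_image.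
  by exists (glue (cc fs) fs).
- have [F0|[e Fe]] := enum_countable cF.
    rewrite F0 bigcup_set0; exists (fun=> 0); split; first exact: integrable0.
    by split => // ; split => [g []|g _]; exact: FB0.
  have hR k : Rplus_set B H (e k) by apply: hF; rewrite Fe; exists k.
  pose fs k := projT1 (cid (hR k)).
  have Ps k : L1 (fs k) /\ (forall x, 0 <= fs k x) /\
    (forall g, e k g -> {ae lebesgue2, forall x, upper_der (rot_basis B g) (fs k) x = +oo%E}) /\
    (forall g, ~ e k g -> FB (rot_basis H g) (fs k)) := projT2 (cid (hR k)).
  have [Lf [h1 h2]] := main_glue dB dH (fun k => (Ps k).1)
    (fun k g => (Ps k).2.2.1 g) (fun k g => (Ps k).2.2.2 g).
  have -> : \bigcup_(E in F) E = \bigcup_k e k.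
    by rewrite Fe bigcup_image.
  exists (glue (cc fs) fs); split => //; split => //.
  move=> x; rewrite /glue mulr_ge0 //.
    exact: ltW (cc_prop (Ps _).1).1.
  exact: (Ps _).2.1.
Qed.
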